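(* Let $S$ be a periodic semigroup with apartness satisfying assumption (CD$_S$). Then $\tilde{\mathcal D}=\tilde{\mathcal J}$.
   Context: Constructive (intuitionistic) mathematics. A semigroup with apartness is a semigroup with an apartness relation $\#$ (irreflexive, symmetric, cotransitive: $x\#z\Rightarrow(x\#y\vee y\#z)$) such that $xy\#zw\Rightarrow(x\#z\vee y\#w)$. $S$ is periodic if for each $a\in S$ there are positive integers $m,r$ with $a^{m+r}=a^m$. $S^1=S\sqcup\{1\}$, $1$ an identity, $1\#s$ for all $s\in S$. $a\succ_l b\Leftrightarrow\forall_{s\in S^1}(a\#sb)$; $a\succ_r b\Leftrightarrow\forall_{s\in S^1}(a\#bs)$; $a\succ_j b\Leftrightarrow\forall_{s,t\in S^1}(a\#sbt)$. $\tilde{\mathcal L}=(\succ_l)\cup(\succ_l)^{-1}$, $\tilde{\mathcal R}=(\succ_r)\cup(\succ_r)^{-1}$, $\tilde{\mathcal J}=(\succ_j)\cup(\succ_j)^{-1}$, and $\tilde{\mathcal D}=\tilde{\mathcal L}*\tilde{\mathcal R}$ where $\alpha*\beta=\{(x,y)\mid\forall_{z\in S}(x\alpha z\vee z\beta y)\}$. Assumption (CD$_S$): for every predicate $P(x)$ of the form $u(x)\#v$ or $\forall_s(u(s,x)\#v)$ ($u,v$ terms built by multiplication from variables and elements of $S^1$, $x$ not occurring in $v$), and every $Q$ of the form $u\#v$, $\forall_s(u(s)\#v)$ or $\forall_{s,t}(u(s,t)\#v)$ ($x$ not occurring in $u,v$; $s,t$ not in $v$), the implication $\forall_x(P(x)\vee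 Q)\Rightarrow(\forall_xP(x))\vee Q$ holds. *)

(* Defs.v *)
Set Implicit Arguments.

(** Semigroup with apartness. Equality is Leibniz equality on the carrier. *)
Record apSemigroup := {
  car :> Type;
  mul : car -> car -> car;
  ap : car -> car -> Prop;
  mulA : forall x y z, mul x (mul y z) = mul (mul x y) z;
  ap_irr : forall x, ~ ap x x;
  ap_sym : forall x y, ap x y -> ap y x;
  ap_cot : forall x y z, ap x z -> ap x y \/ ap y z;
  ap_mul : forall x y z w, ap (mul x y) (mul z w) -> ap x z \/ ap y w
}.

Section Defs.
Variable G : apSemigroup.

(** a^n for n >= 1 (the value at n = 0 is an irrelevant dummy). *)
Fixpoint spow (a : G) (n : nat) : G :=
  match n with
  | O => a
  | S k => match k with O => a | _ => mul G (spow a k) a end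
  end.

Definition periodic : Prop :=
  forall a : G, exists m r : nat, 0 < m /\ 0 < r /\ spow a (m + r) = spow a m.

(** S^1 = S + {1}, represented as option G with None = 1. *)
Definition S1 := option G.

Definition mul1 (x y : S1) : S1 :=
  match x, y with
  | None, _ => y
  | _, None => x
  | Some a, Some b => Some (mul G a b)
  end.

Definition ap1 (x y : S1) : Prop :=
  match x, y with
  | Some a, Some b => ap G a b
  | None, None => False
  | _, _ => True
  end.

Definition lmul (s : S1) (b : G) : G :=
  match s with None => b | Some c => mul G c b end.
Definition rmul (b : G) (s : S1) : G :=
  match s with None => b | Some c => mul G b c end.

Definition succ_l (a b : G) : Prop := forall s : S1, ap G a (lmul s b).
Definition succ_r (a b : G) : Prop := forall s : S1, ap G a (rmul b s).
Definition succ_j (a b : G) : Prop :=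
  forall s t : S1, ap G a (rmul (lmul s b) t).

Definition Lt (x y : G) : Prop := succ_l x y \/ succ_l y x.
Definition Rt (x y : G) : Prop := succ_r x y \/ succ_r y x.
Definition Jt (x y : G) : Prop := succ_j x y \/ succ_j y x.

Definition rstar (alpha beta : G -> G -> Prop) (x y : G) : Prop :=
  forall z : G, alpha x z \/ beta z y.

Definition Dt : G -> G -> Prop := rstar Lt Rt.

Inductive term (V : Type) : Type :=
  | TVar : V -> term V
  | TConst : S1 -> term V
  | TMul : term V -> term V -> term V.

Fixpoint teval (V : Type) (env : V -> S1) (u : term V) : S1 :=
  match u with
  | TVar v => env v
  | TConst _ c => c
  | TMul u1 u2 => mul1 (teval env u1) (teval env u2)
  end.

Definition noenv (e : Empty_set) : S1 := match e with end.

(** Shapes of P(x):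
    - PAp u v     : u(x) # v            (v does not contain x)
    - PAll u v    : forall s, u(s,x) # v(s)   (v does not contain x)
    In PAll, the variable [true] of u is s and [false] is x. *)
Inductive Pshape : Type :=
  | PAp : term unit -> term Empty_set -> Pshape
  | PAll : term bool -> term unit -> Pshape.

Definition Pden (p : Pshape) (x : G) : Prop :=
  match p with
  | PAp u v => ap1 (teval (fun _ => Some x) u) (teval noenv v)
  | PAll u v => forall s : S1,
      ap1 (teval (fun b : bool => if b then s else Some x) u)
          (teval (fun _ => s) v)
  end.

(** Shapes of Q (x does not occur; s, t do not occur in v):
    - QAp u v   : u # v
    - QAll1 u v : forall s, u(s) # v
    - QAll2 u v : forall s t, u(s,t) # v   ([true] is s, [false] is t) *)
Inductive Qshape : Type :=
  | QAp : term Empty_set -> term Empty_set -> Qshape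
  | QAll1 : term unit -> term Empty_set -> Qshape
  | QAll2 : term bool -> term Empty_set -> Qshape.

Definition Qden (q : Qshape) : Prop :=
  match q with
  | QAp u v => ap1 (teval noenv u) (teval noenv v)
  | QAll1 u v => forall s : S1, ap1 (teval (fun _ => s) u) (teval noenv v)
  | QAll2 u v => forall s t : S1,
      ap1 (teval (fun b : bool => if b then s else t) u) (teval noenv v)
  end.

Definition CD : Prop :=
  forall (p : Pshape) (q : Qshape),
    (forall x : G, Pden p x \/ Qden q) -> (forall x : G, Pden p x) \/ Qden q.

End Defs.

(* Main.v *)
Require Import Defs.
From Stdlib Require Import Arith Lia PeanoNat.

Arguments mul1 {G}. Arguments ap1 {G}.

Lemma m1A {G : apSemigroup} (a b c : S1 G) : mul1 a (mul1 b c) = mul1 (mul1 a b) c.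
Proof. destruct a, b, c; simpl; auto. rewrite mulA; auto. Qed.
Lemma m11l {G : apSemigroup} (a : S1 G) : mul1 None a = a.
Proof. reflexivity. Qed.
Lemma m11r {G : apSemigroup} (a : S1 G) : mul1 a None = a.
Proof. destruct a; reflexivity. Qed.
Lemma a1irr {G : apSemigroup} (a : S1 G) : ~ ap1 a a.
Proof. destruct a; simpl; auto. apply ap_irr. Qed.
Lemma a1sym {G : apSemigroup} (a b : S1 G) : ap1 a b -> ap1 b a.
Proof. destruct a, b; simpl; auto. apply ap_sym. Qed.
Lemma a1cot {G : apSemigroup} (a b c : S1 G) : ap1 a c -> ap1 a b \/ ap1 b c.
Proof. destruct a, b, c; simpl; auto. apply ap_cot. Qed.
Lemma a1mul {G : apSemigroup} (x y z w : S1 G) :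
  ap1 (mul1 x y) (mul1 z w) -> ap1 x z \/ ap1 y w.
Proof. destruct x, y, z, w; simpl; auto; try tauto; apply ap_mul. Qed.
Lemma a1cl {G : apSemigroup} (a u v : S1 G) : ap1 (mul1 a u) (mul1 a v) -> ap1 u v.
Proof. intro H. destruct (a1mul _ _ _ _ H) as [H1|H1]; auto. exfalso; exact (a1irr _ H1). Qed.
Lemma a1cr {G : apSemigroup} (a u v : S1 G) : ap1 (mul1 u a) (mul1 v a) -> ap1 u v.
Proof. intro H. destruct (a1mul _ _ _ _ H) as [H1|H1]; auto. exfalso; exact (a1irr _ H1). Qed.

Fixpoint pw {G : apSemigroup} (a : S1 G) (n : nat) : S1 G :=
  match n with O => None | S k => mul1 (pw a k) a end.

Lemma pw_add {G : apSemigroup} (a : S1 G) i j : pw a (i + j) = mul1 (pw a i) (pw a j).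
Proof. induction j; simpl. rewrite Nat.add_0_r, m11r; auto.
  rewrite Nat.add_succ_r; simpl. rewrite IHj, m1A; auto. Qed.
Lemma pw_S' {G : apSemigroup} (a : S1 G) n : pw a (S n) = mul1 a (pw a n).
Proof. change (S n) with (1 + n). rewrite pw_add. reflexivity. Qed.

Lemma pw_spow {G : apSemigroup} (a : G) n : pw (Some a) (S n) = Some (spow _ a (S n)).
Proof. induction n. reflexivity. change (pw (Some a) (S (S n))) with (mul1 (pw (Some a) (S n)) (Some a)).
  rewrite IHn. reflexivity. Qed.

Lemma per_pw {G : apSemigroup} : periodic G -> forall a : S1 G,
  exists m r, 0 < m /\ 0 < r /\ forall n j, m <= n -> pw a (n + j * r) = pw a n.
Proof.
  intros P [a|].
  - destruct (P a) as (m & r & Hm & Hr & E). exists m, r; repeat split; auto.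
    assert (E1 : pw (Some a) (m + r) = pw (Some a) m).
    { destruct m; [lia|]. rewrite Nat.add_succ_l. rewrite !pw_spow. rewrite <- Nat.add_succ_l, E; auto. }
    intros n j Hn. induction j; simpl. rewrite Nat.add_0_r; auto.
    replace (n + (r + j * r)) with ((m + r) + ((n - m) + j * r)) by lia.
    rewrite pw_add, E1, <- pw_add. replace (m + (n - m + j * r)) with (n + j * r) by lia. auto.
  - assert (Z : forall n, @pw G None n = None) by (induction n; simpl; [auto| rewrite IHn; auto]).
    exists 1, 1; repeat split; auto. intros. rewrite !Z; auto.
Qed.

Lemma idem_common {G : apSemigroup} : periodic G -> forall a b : S1 G,
  exists k, 0 < k /\ mul1 (pw a k) (pw a k) = pw a k /\ mul1 (pw b k) (pw b k) = pw b k.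
Proof.
  intros P a b. destruct (per_pw P a) as (m1 & r1 & H1 & H2 & E1).
  destruct (per_pw P b) as (m2 & r2 & H3 & H4 & E2).
  assert (Q1 : 0 < r1 * m2 * r2) by (apply Nat.mul_pos_pos; [apply Nat.mul_pos_pos|]; auto).
  assert (Q2 : 0 < m1 * r1 * r2) by (apply Nat.mul_pos_pos; [apply Nat.mul_pos_pos|]; auto).
  assert (K1 : m1 <= m1 * r1 * m2 * r2) by (replace (m1 * r1 * m2 * r2) with (m1 * (r1 * m2 * r2)) by ring; nia).
  assert (K2 : m2 <= m1 * r1 * m2 * r2) by (replace (m1 * r1 * m2 * r2) with (m2 * (m1 * r1 * r2)) by ring; nia).
  exists (m1 * r1 * m2 * r2). split. lia. split; rewrite <- pw_add.
  - replace (m1 * r1 * m2 * r2 + m1 * r1 * m2 * r2) with (m1 * r1 * m2 * r2 + (m1*m2*r2) * r1) by lia.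
    apply E1. lia.
  - replace (m1 * r1 * m2 * r2 + m1 * r1 * m2 * r2) with (m1 * r1 * m2 * r2 + (m1*m2*r1) * r2) by lia.
    apply E2. lia.
Qed.

Lemma Some_lmul {G : apSemigroup} (s : S1 G) (b : G) : mul1 s (Some b) = Some (lmul s b).
Proof. destruct s; reflexivity. Qed.
Lemma Some_rmul {G : apSemigroup} (s : S1 G) (b : G) : mul1 (Some b) s = Some (rmul b s).
Proof. destruct s; reflexivity. Qed.

Lemma iterL {G : apSemigroup} (X Y s t s' t' : S1 G) : forall n,
  ap1 X (mul1 (mul1 (pw (mul1 s s') n) X) (pw (mul1 t' t) n)) ->
  ap1 X (mul1 (mul1 s Y) t) \/ ap1 Y (mul1 (mul1 s' X) t').
Proof.
  induction n; intro H.
  - simpl in H. rewrite m11r in H. exfalso; exact (a1irr _ H).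
  - change (pw (mul1 s s') (S n)) with (mul1 (pw (mul1 s s') n) (mul1 s s')) in H.
    rewrite pw_S' in H.
    destruct (a1cot _ (mul1 (mul1 (pw (mul1 s s') n) X) (pw (mul1 t' t) n)) _ H) as [H1|H1]; auto.
    replace (mul1 (mul1 (mul1 (pw (mul1 s s') n) (mul1 s s')) X) (mul1 (mul1 t' t) (pw (mul1 t' t) n)))
      with (mul1 (pw (mul1 s s') n) (mul1 (mul1 (mul1 (mul1 s s') X) (mul1 t' t)) (pw (mul1 t' t) n))) in H1
      by (rewrite !m1A; reflexivity).
    rewrite <- m1A in H1. apply a1cl, a1cr in H1.
    destruct (a1cot _ (mul1 (mul1 s Y) t) _ H1) as [H2|H2]; auto.
    replace (mul1 (mul1 (mul1 s s') X) (mul1 t' t)) with (mul1 (mul1 s (mul1 (mul1 s' X) t')) t) in H2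
      by (rewrite !m1A; reflexivity).
    apply a1cr, a1cl in H2. auto.
Qed.

Lemma KL {G : apSemigroup} (x y : G) : periodic G -> Dt G x y -> forall s t s' t' : S1 G,
  ap1 (Some x) (mul1 (mul1 s (Some y)) t) \/ ap1 (Some y) (mul1 (mul1 s' (Some x)) t').
Proof.
  intros P D s t s' t'.
  destruct (idem_common P (mul1 s s') (mul1 t' t)) as (k & Hk & IE & IF).
  destruct k as [|k']; [lia|].
  set (a := mul1 s s') in *. set (b := mul1 t' t) in *.
  set (X := Some x). set (Y := Some y).
  set (E := pw a (S k')) in *. set (F := pw b (S k')) in *.
  assert (EE : E = mul1 (mul1 (pw a k') s) s') by (unfold E, a; simpl; rewrite m1A; auto).
  assert (FE : F = mul1 t' (mul1 t (pw b k'))) by (unfold F; rewrite pw_S'; unfold b; rewrite m1A; auto).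
  assert (Main : ap1 X (mul1 (mul1 E X) F) -> ap1 X (mul1 (mul1 s Y) t) \/ ap1 Y (mul1 (mul1 s' X) t'))
    by (apply iterL).
  assert (HXF : ap1 X (mul1 X F) -> ap1 X (mul1 (mul1 E X) F)).
  { intro H. destruct (a1cot _ (mul1 (mul1 E X) F) _ H) as [H1|H1]; auto.
    assert (Q : mul1 (mul1 E X) F = mul1 (mul1 (mul1 E X) F) F) by (rewrite <- (m1A (mul1 E X) F F), IF; auto).
    rewrite Q in H1. apply a1cr, a1sym in H1. auto. }
  assert (HEX : ap1 X (mul1 E X) -> ap1 X (mul1 (mul1 E X) F)).
  { intro H. destruct (a1cot _ (mul1 (mul1 E X) F) _ H) as [H1|H1]; auto.
    assert (Q : mul1 (mul1 E X) F = mul1 E (mul1 (mul1 E X) F)) by (rewrite !m1A, IE; auto).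
    rewrite Q in H1. apply a1cl, a1sym in H1. auto. }
  assert (Zs : Some (lmul s' x) = mul1 s' X) by (unfold X; rewrite Some_lmul; auto).
  destruct (D (lmul s' x)) as [[H|H]|[H|H]].
  - apply Main, HEX.
    assert (H1 : ap1 X (mul1 (mul1 (pw a k') s) (Some (lmul s' x)))) by (unfold X; rewrite Some_lmul; exact (H _)).
    rewrite Zs, m1A, <- EE in H1. exact H1.
  - exfalso. exact (ap_irr _ _ (H s')).
  - assert (H1 : ap1 (Some (lmul s' x)) (mul1 Y (mul1 t (pw b k')))) by (unfold Y; rewrite Some_rmul; exact (H _)).
    rewrite Zs in H1.
    destruct (a1cot _ (mul1 (mul1 (mul1 s' X) t') (mul1 t (pw b k'))) _ H1) as [H2|H2].
    + replace (mul1 (mul1 (mul1 s' X) t') (mul1 t (pw b k'))) with (mul1 s' (mul1 X F)) in H2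
        by (rewrite FE, !m1A; reflexivity).
      apply a1cl in H2. auto.
    + apply a1cr, a1sym in H2. auto.
  - assert (H1 : ap1 Y (mul1 (Some (lmul s' x)) t')) by (unfold Y; rewrite Some_rmul; exact (H _)).
    rewrite Zs in H1. auto.
Qed.

Lemma cd1 {G : apSemigroup} (C : CD G) (p : Pshape G) (q : Qshape G) (A : S1 G -> Prop) (Q : Prop) :
  (forall g, Pden p g <-> A (Some g)) -> (Qden q <-> Q) -> (forall s, A s \/ Q) -> (forall s, A s) \/ Q.
Proof.
  intros HP HQ H.
  destruct (C p q) as [K|K].
  - intro g. destruct (H (Some g)) as [H1|H1]; [left; apply HP; auto | right; apply HQ; auto].
  - destruct (H None) as [H0|H0]; auto. left. intros [g|]; auto. apply HP; auto.
  - right; apply HQ; auto.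
Qed.

Ltac sv := cbn; split; let K := fresh "K" in intro K;
  first [ apply ap_sym; exact K
        | exact K
        | let s0 := fresh "s" in intro s0; specialize (K s0); destruct s0; cbn in *; apply ap_sym; exact K
        | let s0 := fresh "s" in let t0 := fresh "t" in
          intros s0 t0; specialize (K s0 t0); destruct s0, t0; cbn in *; apply ap_sym; exact K
        | tauto ].

Lemma cd_LR {G : apSemigroup} (C : CD G) (a b c d : G) :
  (forall s t : S1 G, ap G a (lmul s b) \/ ap G c (rmul d t)) -> succ_l G a b \/ succ_r G c d.
Proof.
  intro H.
  assert (H1 : forall s, (forall t, ap G c (rmul d t)) \/ ap G a (lmul s b)).
  { intro s. apply (cd1 C (PAp (TMul (TConst _ (Some d)) (TVar G tt)) (TConst _ (Some c)))
      (QAp (TConst _ (Some a)) (TConst _ (Some (lmul s b)))) (fun t => ap G c (rmul d t))).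
    - intro g. sv.
    - sv.
    - intro t. destruct (H s t); tauto. }
  unfold succ_l, succ_r.
  apply (cd1 C (PAp (TMul (TVar G tt) (TConst _ (Some b))) (TConst _ (Some a)))
    (QAll1 (TMul (TConst _ (Some d)) (TVar G tt)) (TConst _ (Some c))) (fun s => ap G a (lmul s b))).
  - intro g. sv.
  - sv.
  - intro s. destruct (H1 s); tauto.
Qed.

Lemma cd_J {G : apSemigroup} (C : CD G) (x y : G) :
  (forall s t s' t' : S1 G, ap G x (rmul (lmul s y) t) \/ ap G y (rmul (lmul s' x) t')) ->
  succ_j G x y \/ succ_j G y x.
Proof.
  intro H.
  assert (H1 : forall s t s', (forall t', ap G y (rmul (lmul s' x) t')) \/ ap G x (rmul (lmul s y) t)).
  { intros s t s'.
    apply (cd1 C (PAp (TMul (TConst _ (Some (lmul s' x))) (TVar G tt)) (TConst _ (Some y)))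
      (QAp (TConst _ (Some x)) (TConst _ (Some (rmul (lmul s y) t)))) (fun t' => ap G y (rmul (lmul s' x) t'))).
    - intro g. sv.
    - sv.
    - intro t'. destruct (H s t s' t'); tauto. }
  assert (H2 : forall s t, (forall s' t', ap G y (rmul (lmul s' x) t')) \/ ap G x (rmul (lmul s y) t)).
  { intros s t.
    apply (cd1 C (PAll (TMul (TMul (TVar G false) (TConst _ (Some x))) (TVar G true)) (TConst _ (Some y)))
      (QAp (TConst _ (Some x)) (TConst _ (Some (rmul (lmul s y) t)))) (fun s' => forall t', ap G y (rmul (lmul s' x) t'))).
    - intro g. sv.
    - sv.
    - intro s'. apply H1. }
  assert (H3 : forall s, (forall t, ap G x (rmul (lmul s y) t)) \/ (forall s' t', ap G y (rmul (lmul s' x) t'))).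
  { intros s.
    apply (cd1 C (PAp (TMul (TConst _ (Some (lmul s y))) (TVar G tt)) (TConst _ (Some x)))
      (QAll2 (TMul (TMul (TVar G true) (TConst _ (Some x))) (TVar G false)) (TConst _ (Some y)))
      (fun t => ap G x (rmul (lmul s y) t))).
    - intro g. sv.
    - sv.
    - intro t. destruct (H2 s t); tauto. }
  unfold succ_j.
  apply (cd1 C (PAll (TMul (TMul (TVar G false) (TConst _ (Some y))) (TVar G true)) (TConst _ (Some x)))
      (QAll2 (TMul (TMul (TVar G true) (TConst _ (Some x))) (TVar G false)) (TConst _ (Some y)))
      (fun s => forall t, ap G x (rmul (lmul s y) t))).
  - intro g. sv.
  - sv.
  - exact H3.
Qed.

Theorem mainTheorem17 (S : apSemigroup) :
  periodic S -> CD S -> forall x y : S, @Dt S x y <-> @Jt S x y.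
Proof.
  intros P C x y. split.
  - intro D. apply (cd_J C). intros s t s' t'.
    destruct (KL x y P D s t s' t') as [H|H]; rewrite Some_lmul, Some_rmul in H; auto.
  - intros [Hj|Hj] z.
    + destruct (cd_LR C x z z y) as [K|K]; [| left; left; auto | right; left; auto].
      intros s t. specialize (Hj s t).
      assert (H : ap1 (Some x) (mul1 (mul1 s (Some y)) t)) by (rewrite Some_lmul, Some_rmul; exact Hj).
      destruct (a1cot _ (mul1 s (Some z)) _ H) as [H1|H1].
      * rewrite Some_lmul in H1. auto.
      * rewrite <- m1A in H1. apply a1cl in H1. rewrite Some_rmul in H1. auto.
    + destruct (cd_LR C z x y z) as [K|K]; [| left; right; auto | right; right; auto].
      intros s t. specialize (Hj s t).
      assert (H : ap1 (Some y) (mul1 (mul1 s (Some x)) t)) by (rewrite Some_lmul, Some_rmul; exact Hj).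
      destruct (a1cot _ (mul1 (Some z) t) _ H) as [H1|H1].
      * rewrite Some_rmul in H1. auto.
      * apply a1cr in H1. rewrite Some_lmul in H1. auto.
Qed.
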